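(* For every positive integer $k$, as formal power series in $q$, $$\sum_{n\ge1}\mathrm{spt}k_{do}(n)\,q^n=V_k(q)\,(-q^2;q^2)_\infty+W_k(q)\,(-q;q^2)_\infty+2(-q)^k(q^2;q^2)_{k-1},$$ where $V_1(q)=2q$, $V_k(q)=(q^{2k-1}-q)V_{k-1}(q)+2q^k$ for $k>1$, and $W_1(q)=q$, $W_k(q)=(q^{2k-1}-q)W_{k-1}(q)+q^{2k-1}$ for $k>1$.
   Context: For a partition $\pi$, $s(\pi)$ is its smallest part. $\mathrm{Spt}k_{do}(n)$ is the set of partitions $\pi$ of $n$ in which $s(\pi)$ occurs exactly $k$ times and the remaining parts (those larger than $s(\pi)$) are pairwise distinct and each has parity different from that of $s(\pi)$; $\mathrm{spt}k_{do}(n)=|\mathrm{Spt}k_{do}(n)|$. Notation: $(a;q)_0=1$, $(a;q)_n=\prod_{j=0}^{n-1}(1-aq^j)$, $(a;q)_\infty=\prod_{j\ge0}(1-aq^j)$. *)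

(* Defs.v *)
From mathcomp Require Import all_boot all_order all_algebra.
Set Implicit Arguments. Unset Strict Implicit. Unset Printing Implicit Defensive.
Import GRing.Theory Num.Theory.
Local Open Scope ring_scope.

(* A partition of n is encoded by its multiplicity function
   m : 'I_(n+1) -> 'I_(n+1): part i (1 <= i <= n) occurs m i times. This is a bijection with partitions of n. *)
Definition is_partition_of (n : nat) (m : {ffun 'I_n.+1 -> 'I_n.+1}) : bool :=
  ((m ord0 : nat) == 0%N) && ((\sum_(i < n.+1) (i * m i)%N)%N == n).

Definition in_sptk_do (k : nat) {n : nat} (m : {ffun 'I_n.+1 -> 'I_n.+1}) : bool :=
  is_partition_of (n:=n) m &&
  [exists s : 'I_n.+1,
     [&& (0 < s)%N, (m s : nat) == k,
         [forall i : 'I_n.+1, ((0 < i)%N && (i < s)%N) ==> ((m i : nat) == 0%N)] &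
         [forall i : 'I_n.+1, (s < i)%N ==>
             (((m i : nat) <= 1)%N && (((m i : nat) == 1%N) ==> (odd i != odd s)))]]].

Definition sptk_do (k n : nat) : nat := #|[pred m : {ffun 'I_n.+1 -> 'I_n.+1} | in_sptk_do k m]|.

(* q-Pochhammer with general base: qpoch a b N = prod_{j<N} (1 - a b^j),
   so (a;q)_N = qpoch a 'X N and (a;q^2)_N = qpoch a 'X^2 N. *)
Definition qpoch (a b : {poly int}) (N : nat) : {poly int} :=
  \prod_(j < N) (1 - a * b ^+ j).

Fixpoint Vk (k : nat) : {poly int} :=
  match k with
  | 0 => 0
  | 1 => 2%:R *: 'X
  | S k1 => ('X ^+ (k.*2.-1) - 'X) * Vk k1 + 2%:R *: 'X ^+ k
  end.

Fixpoint Wk (k : nat) : {poly int} :=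
  match k with
  | 0 => 0
  | 1 => 'X
  | S k1 => ('X ^+ (k.*2.-1) - 'X) * Wk k1 + 'X ^+ (k.*2.-1)
  end.

(* Truncation of the right-hand side: the infinite products are replaced by
   their first N factors; all omitted factors are 1 + O(q^(N+1)), so the
   coefficients of q^n with n < N agree with those of the formal power series. *)
Definition rhs_trunc (k N : nat) : {poly int} :=
  Vk k * qpoch (- 'X ^+ 2) ('X ^+ 2) N
  + Wk k * qpoch (- 'X) ('X ^+ 2) N
  + 2%:R *: ((- 'X) ^+ k * qpoch ('X ^+ 2) ('X ^+ 2) k.-1).

(* Main.v *)
Require Import Defs.
From mathcomp Require Import all_boot all_order all_algebra.
From mathcomp Require Import ring zify.
Import GRing.Theory Num.Theory.
Local Open Scope ring_scope.

Definition cmod (M : nat) (p q : {poly int}) := exists r : {poly int}, p - q = 'X^M * r.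

Lemma cmod_refl M p : cmod M p p.
Proof. by exists 0; rewrite subrr mulr0. Qed.

Lemma cmod_sym M p q : cmod M p q -> cmod M q p.
Proof. by case=> r e; exists (- r); rewrite mulrN -e opprB. Qed.

Lemma cmod_trans M p q r : cmod M p q -> cmod M q r -> cmod M p r.
Proof.
case=> a ea [b eb]; exists (a + b); rewrite mulrDr -ea -eb; ring.
Qed.

Lemma cmodD M p q p' q' : cmod M p q -> cmod M p' q' -> cmod M (p + p') (q + q').
Proof.
case=> a ea [b eb]; exists (a + b); rewrite mulrDr -ea -eb; ring.
Qed.

Lemma cmodB M p q p' q' : cmod M p q -> cmod M p' q' -> cmod M (p - p') (q - q').
Proof.
case=> a ea [b eb]; exists (a - b); rewrite mulrBr -ea -eb; ring.
Qed.

Lemma cmodMl M c p q : cmod M p q -> cmod M (c * p) (c * q).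
Proof.
case=> a ea; exists (c * a); rewrite -mulrBr ea; ring.
Qed.

Lemma cmodM M p q p' q' : cmod M p q -> cmod M p' q' -> cmod M (p * p') (q * q').
Proof.
move=> h1 h2; apply: (@cmod_trans _ _ (p * q')); first exact: cmodMl.
by rewrite mulrC [q * _]mulrC; apply: cmodMl.
Qed.

Lemma cmodW M M' p q : (M' <= M)%N -> cmod M p q -> cmod M' p q.
Proof.
move=> le [a ea]; exists ('X^(M - M') * a); rewrite ea mulrA -exprD subnKC //.
Qed.

Lemma cmod_coef M p q i : cmod M p q -> (i < M)%N -> p`_i = q`_i.
Proof.
case=> a ea lt; apply/eqP; rewrite -subr_eq0 -coefB ea coefXnM lt //.
Qed.

Lemma cmodX0 M a p : (M <= a)%N -> cmod M ('X^a * p) 0.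
Proof.
move=> le; exists ('X^(a - M) * p); rewrite subr0 mulrA -exprD subnKC //.
Qed.

Lemma cmodX M a p q : (M <= a)%N -> cmod M (q + 'X^a * p) q.
Proof.
move=> le; exists ('X^(a - M) * p); rewrite addrC addKr mulrA -exprD subnKC //.
Qed.

Definition PP (L s : nat) : {poly int} :=
  \prod_(0 <= i < L) (if (s < i)%N && (odd i != odd s) then 1 + 'X^i else 1).

Definition GG (L k : nat) : {poly int} := \sum_(1 <= s < L) 'X^(k * s) * PP L s.

Lemma prod_nat_pick (L j : nat) (c : {poly int}) : (j < L)%N ->
  \prod_(0 <= i < L) (if i == j then c else 1) = c.
Proof.
move=> hj; rewrite big_mkord (bigD1 (Ordinal hj)) //= eqxx big1 ?mulr1 //.
move=> i hi; case: eqP => // e; move: hi; suff -> : i = Ordinal hj by rewrite eqxx.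
by apply: val_inj.
Qed.

Lemma PP_rec L s : (s.+1 < L)%N -> PP L s = (1 + 'X^(s.+1)) * PP L s.+2.
Proof.
move=> hs; rewrite /PP -(@prod_nat_pick L s.+1 (1 + 'X^(s.+1))%R hs) -big_split /=.
apply: eq_big_nat => i _.
have o2 : odd s.+2 = odd s by rewrite /= negbK.
rewrite ?negbK.
have [h|h] := eqVneq i s.+1.
- subst i; rewrite ltnSn /= ltnNge leqnSn /= mulr1; by case: (odd s).
- rewrite mul1r; case: (ltnP s i) => h2 /=.
  + case: (eqVneq i s.+2) => [e|h3].
    * by subst i; rewrite /= ?negbK eqxx ltnn.
    * by have -> : (s.+2 < i)%N by lia.
  + by rewrite ifF //; apply/negbTE; rewrite negb_and -leqNgt; apply/orP; left; lia.
Qed.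

Lemma PP_end L s : (L <= s.+1)%N -> PP L s = 1.
Proof.
move=> hs; rewrite /PP big_nat_cond big1 // => i /andP[/andP[_ hi] _].
have -> : (s < i)%N = false by lia. by [].
Qed.

Lemma GG_rec L k : (3 <= L)%N ->
  GG L k.+1 = ('X^(k.+1) * PP L 1) *+ 2 + 'X^(k.*2.+1) * PP L 0
    + ('X^(k.*2.+1) - 'X) * GG L k
    - 'X^((k * L).+1) * (PP L (L - 2) + 'X^k * PP L (L - 1)).
Proof.
move=> hL; have [l el] : exists l, L = l.+3 by exists (L - 3)%N; lia.
subst L; rewrite !subSS !subn0.
set P := PP l.+3.
have S2 : forall f : nat -> {poly int},
    \sum_(2 <= s < l.+3) f s = \sum_(0 <= j < l.+1) f (j + 2)%N.
  by move=> f; have := big_addn 0 l.+3 2 xpredT f; rewrite add0n !subSS subn0 => ->.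
have T : forall f : nat -> {poly int},
    \sum_(0 <= s < l.+3) f s = \sum_(0 <= j < l.+1) f j + f l.+1 + f l.+2.
  by move=> f; rewrite !big_nat_recr.
have G0 : \sum_(0 <= s < l.+3) 'X^(k * s) * P s = P 0%N + GG l.+3 k.
  by rewrite (big_ltn (isT : (0 < l.+3)%N)) muln0 expr0 mul1r.
have G2 : GG l.+3 k = 'X^k * P 1%N + \sum_(2 <= s < l.+3) 'X^(k * s) * P s.
  by rewrite /GG (big_ltn (isT : (1 < l.+3)%N)) muln1.
rewrite {1}/GG (big_ltn (isT : (1 < l.+3)%N)) S2 -/P.
have E : forall j, (j < l.+1)%N -> 'X^(k.+1 * (j + 2)) * P (j + 2)%N =
   'X^(k.*2.+1) * ('X^(k * j) * P j) - 'X * ('X^(k * (j + 2)) * P (j + 2)%N).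
  move=> j hj; rewrite /P (@PP_rec l.+3 j); last lia.
  rewrite -/P addn2.
  have -> : (k.+1 * j.+2 = k * j + k + k + j + 2)%N by ring.
  have -> : (k * j.+2 = k * j + k + k)%N by ring.
  have -> : (k.*2.+1 = k + k + 1)%N by lia.
  rewrite !exprD !exprS ?expr0; ring.
under eq_big_nat => j /andP[_ hj] do rewrite (E j hj).
rewrite sumrB -!mulr_sumr.
have A1 : \sum_(0 <= i < l.+1) 'X^(k * (i + 2)) * P (i + 2)%N = GG l.+3 k - 'X^k * P 1%N.
  by rewrite G2 S2 addrC addKr.
have A0 : \sum_(0 <= i < l.+1) 'X^(k * i) * P i = P 0%N + GG l.+3 k - ('X^(k * l.+1) * P l.+1 + 'X^(k * l.+2) * P l.+2).
  by rewrite -G0 T; ring.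
rewrite A1 A0.
have -> : (k * l.+3 = k + k + k * l.+1)%N by ring.
have -> : (k * l.+2 = k + k * l.+1)%N by ring.
have -> : (k.*2.+1 = k + k + 1)%N by lia.
rewrite ?muln1 !(exprD, exprS) ?expr0; ring.
Qed.

Lemma cmodXB M a p q : (M <= a)%N -> cmod M (q - 'X^a * p) q.
Proof.
move=> le; exists (- ('X^(a - M) * p)); rewrite addrC addKr mulrN mulrA -exprD subnKC //.
Qed.

Definition Ck (k : nat) : {poly int} :=
  2%:R *: ((- 'X) ^+ k * qpoch ('X ^+ 2) ('X ^+ 2) k.-1).

Lemma Vk_S k : Vk k.+2 = ('X^(k.*2.+3) - 'X) * Vk k.+1 + 2%:R *: 'X^(k.+2).
Proof. by []. Qed.

Lemma Wk_S k : Wk k.+2 = ('X^(k.*2.+3) - 'X) * Wk k.+1 + 'X^(k.*2.+3).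
Proof. by []. Qed.

Lemma GG_cong L k : (3 <= L)%N -> (0 < k)%N ->
  cmod L (GG L k) (Vk k * PP L 1 + Wk k * PP L 0 + Ck k).
Proof.
move=> hL; case: k => // k _; elim: k => [|k IH].
- rewrite GG_rec //.
  have [l el] : exists l, L = l.+3 by exists (L - 3)%N; lia.
  subst L; rewrite !subSS !subn0.
  rewrite (@PP_end l.+3 l.+2) // (@PP_rec l.+3 l.+1) //.
  rewrite (@PP_end l.+3 l.+3) //.
  rewrite /Ck /= /qpoch big_ord0 mul0n !expr0 !expr1 subrr mul0r !scaler_nat.
  exists (-1); rewrite !(exprS); ring.
- rewrite GG_rec //.
  apply: cmod_trans; first by apply: cmodXB; lia.
  apply: cmod_trans.
    apply: cmodD; first exact: cmod_refl.
    apply: cmodMl; exact: IH.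
  apply/cmod_sym; apply/cmod_sym.
  rewrite Vk_S Wk_S.
  set V := Vk k.+1; set W := Wk k.+1.
  rewrite /Ck [k.+2.-1]/= [k.+1.-1]/= /qpoch big_ord_recr -/(qpoch _ _ k) !scaler_nat.
  set Q := qpoch _ _ k.
  have -> : (k.+1.*2.+1 = k.*2.+3)%N by lia.
  have -> : (k.*2.+3 = k + k + 3)%N by lia.
  exists 0; rewrite mulr0 !(exprD, exprS, exprM, expr0) /= !exprMn expr1n; ring.
Qed.

Lemma PP_qpoch1 N : PP N.*2.+1 1 = qpoch (- 'X ^+ 2) ('X ^+ 2) N.
Proof.
elim: N => [|N IH].
  by rewrite /PP /qpoch big_ord0 big_nat1.
rewrite /qpoch big_ord_recr -/(qpoch _ _ N) -IH /PP doubleS big_nat_recr // big_nat_recr //=.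
rewrite odd_double /= andbF mulr1; congr (_ * _).
rewrite mulNr opprK -exprM -exprD; congr (1 + _); congr ('X^_); rewrite -muln2; lia.
Qed.

Lemma PP_qpoch0 N : PP N.*2.+1 0 = qpoch (- 'X) ('X ^+ 2) N.
Proof.
elim: N => [|N IH].
  by rewrite /PP /qpoch big_ord0 big_nat1.
rewrite /qpoch big_ord_recr -/(qpoch _ _ N) -IH /PP doubleS big_nat_recr // big_nat_recr //=.
rewrite odd_double /= mulr1; congr (_ * _).
rewrite mulNr opprK -exprM -exprS; congr (1 + _); congr ('X^_); rewrite -muln2; lia.
Qed.

Lemma rhs_eq k N : rhs_trunc k N = Vk k * PP N.*2.+1 1 + Wk k * PP N.*2.+1 0 + Ck k.
Proof. by rewrite /rhs_trunc PP_qpoch1 PP_qpoch0. Qed.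

Lemma sum_nat_pick (L j : nat) (c : {poly int}) : (j < L)%N ->
  \sum_(0 <= i < L) (if i == j then c else 0) = c.
Proof.
move=> hj; rewrite big_mkord (bigD1 (Ordinal hj)) //= eqxx big1 ?addr0 //.
move=> i hi; case: eqP => // e; move: hi; suff -> : i = Ordinal hj by rewrite eqxx.
by apply: val_inj.
Qed.

Definition Aset (k : nat) (s i c : nat) : bool :=
  if (i < s)%N then c == 0%N else if i == s then c == k
  else (c <= 1)%N && ((c == 1%N) ==> (odd i != odd s)).

Definition fac (n k s i : nat) : {poly int} :=
  \sum_(0 <= c < n.+1 | Aset k s i c) 'X^(i * c).

Lemma fac_lt n k s i : (i < s)%N -> fac n k s i = 1.
Proof.
move=> h; rewrite /fac big_mkcond /= /Aset h.
rewrite (eq_big_nat _ _ (F2 := fun c => if c == 0%N then 1 else 0)); last first.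
  by move=> c _; case: eqP => // ->; rewrite muln0 expr0.
by rewrite sum_nat_pick.
Qed.

Lemma fac_eq n k s : fac n k s s = if (k < n.+1)%N then 'X^(s * k) else 0.
Proof.
rewrite /fac big_mkcond /= /Aset ltnn eqxx.
case: ifP => hk.
  rewrite (eq_big_nat _ _ (F2 := fun c => if c == k then 'X^(s * k) else 0)).
    by rewrite sum_nat_pick.
  by move=> c _; case: eqP => // ->.
by rewrite big1_seq // => c /andP[_]; rewrite mem_iota => /andP[_ hc]; case: eqP => // e; lia.
Qed.

Lemma fac_gt n k s i : (s < i)%N -> (0 < n)%N ->
  fac n k s i = if odd i != odd s then 1 + 'X^i else 1.
Proof.
move=> h hn; rewrite /fac big_mkcond /= /Aset.
have -> : (i < s)%N = false by lia.
have -> : (i == s) = false by lia.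
rewrite (eq_big_nat _ _ (F2 := fun c => (if c == 0%N then 1 else 0) +
    (if c == 1%N then (if odd i != odd s then 'X^i else 0) else 0))); last first.
  move=> c _; case: c => [|[|c]] /=; rewrite ?muln0 ?muln1 ?expr0 ?addr0 ?add0r //.
rewrite big_split /= !sum_nat_pick //.
by case: (odd i != odd s); rewrite ?addr0.
Qed.

Lemma prod_fac n k s : (0 < s)%N -> (s <= n)%N ->
  cmod n.+1 (\prod_(0 <= i < n.+1) fac n k s i) ('X^(k * s) * PP n.+1 s).
Proof.
move=> s0 sn.
pose F i : {poly int} := if (s < i)%N && (odd i != odd s) then 1 + 'X^i else 1.
pose G i := if i == s then 1 else F i.
have E1 : \prod_(0 <= i < n.+1) fac n k s i = fac n k s s * \prod_(0 <= i < n.+1) G i.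
  rewrite -(@prod_nat_pick n.+1 s (fac n k s s)) // -big_split /=.
  apply: eq_big_nat => i _; rewrite /G /F.
  case: (ltngtP i s) => h.
  - by rewrite fac_lt // mul1r.
  - rewrite fac_gt //; last lia. by rewrite mul1r.
  - by rewrite h mulr1.
have E2 : PP n.+1 s = \prod_(0 <= i < n.+1) G i.
  apply: eq_big_nat => i _; rewrite /G /F; case: (eqVneq i s) => [->|//]; by rewrite ltnn.
rewrite E1 E2 fac_eq; case: ifP => hk.
  by rewrite mulnC; apply: cmod_refl.
rewrite mul0r; apply: cmod_sym; apply: cmodX0; nia.
Qed.

Lemma card_family n (A : nat -> nat -> bool) :
  ((#|[pred m : {ffun 'I_n.+1 -> 'I_n.+1} | [forall i : 'I_n.+1, A i (m i)] &&
        ((\sum_(i < n.+1) (i * m i)%N)%N == n)]|)%:R : int)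
  = (\prod_(i < n.+1) \sum_(c < n.+1 | A i c) 'X^(i * c))`_n.
Proof.
rewrite bigA_distr_big_dep coef_sum.
under eq_bigr => f _ do rewrite -(big_morph (fun e => 'X^e) (fun a b => exprD _ a b) (expr0 _)) coefXn.
rewrite -natr_sum; congr (_%:R).
rewrite -sum1_card big_mkcond [RHS]big_mkcond /=; apply: eq_bigr => f _.
rewrite inE eq_sym.
have -> : [forall i : 'I_n.+1, A i (f i)] = (f \in family (fun (i : 'I_n.+1) (c : 'I_n.+1) => A i c)).
  apply/forallP/familyP => H i; exact: H.
by case: (f \in _); case: (_ == _).
Qed.

Definition Qb (k n : nat) (s : 'I_n.+1) (m : {ffun 'I_n.+1 -> 'I_n.+1}) : bool :=
  [&& (0 < s)%N, (m s : nat) == k,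
         [forall i : 'I_n.+1, ((0 < i)%N && (i < s)%N) ==> ((m i : nat) == 0%N)] &
         [forall i : 'I_n.+1, (s < i)%N ==>
             (((m i : nat) <= 1)%N && (((m i : nat) == 1%N) ==> (odd i != odd s)))]].

Arguments Qb k {n} s m.

Lemma in_sptkE k n (m : {ffun 'I_n.+1 -> 'I_n.+1}) :
  in_sptk_do k m = is_partition_of m && [exists s : 'I_n.+1, Qb k s m].
Proof. by []. Qed.

Lemma Qb_uniq k n s s' (m : {ffun 'I_n.+1 -> 'I_n.+1}) : (0 < k)%N ->
  Qb k s m -> Qb k s' m -> s = s'.
Proof.
move=> hk.
have H : forall a b : 'I_n.+1, Qb k a m -> Qb k b m -> ~ (a < b)%N.
  move=> a b /and4P[a0 /eqP ma _ _] /and4P[_ _ /forallP /(_ a) F _] ab.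
  by move: F; rewrite a0 ab /= ma => /eqP k0; move: hk; rewrite k0.
move=> q1 q2; apply: val_inj; case: (ltngtP s s') => // h.
  by case: (H _ _ q1 q2 h).
by case: (H _ _ q2 q1 h).
Qed.

Lemma sptk_sum k n : (0 < k)%N ->
  sptk_do k n = (\sum_(s < n.+1) #|[pred m : {ffun 'I_n.+1 -> 'I_n.+1} | is_partition_of m && Qb k s m]|)%N.
Proof.
move=> hk.
have key : forall m : {ffun 'I_n.+1 -> 'I_n.+1},
    (in_sptk_do k m : nat) = (\sum_(s < n.+1) (is_partition_of m && Qb k s m : nat))%N.
  move=> m; rewrite in_sptkE.
  case: (boolP [exists s : 'I_n.+1, Qb k s m]) => [/existsP[s0 q0]|/existsPn nq].
    rewrite (bigD1 s0) //= q0 andbT big1 ?addn0 // => s hs.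
    case q: (Qb k s m); last by rewrite andbF.
    by move: hs; rewrite (@Qb_uniq k n s s0 m hk q q0) eqxx.
  rewrite andbF big1 // => s _; by rewrite (negbTE (nq s)) andbF.
rewrite /sptk_do -sum1_card big_mkcond /=.
rewrite (eq_bigr (fun m => \sum_(s < n.+1) (is_partition_of m && Qb k s m : nat))%N); last first.
  by move=> m _; rewrite -key inE; case: (in_sptk_do k m).
rewrite exchange_big /=; apply: eq_bigr => s _.
rewrite -sum1_card [RHS]big_mkcond /=; apply: eq_bigr => m _.
by rewrite inE; case: (_ && _).
Qed.

Lemma part_equiv k n (s : 'I_n.+1) (m : {ffun 'I_n.+1 -> 'I_n.+1}) : (0 < s)%N ->
  (is_partition_of m && Qb k s m) =
  [forall i : 'I_n.+1, Aset k s i (m i)] && ((\sum_(i < n.+1) (i * m i)%N)%N == n).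
Proof.
move=> s0; rewrite /is_partition_of /Qb s0 /=.
set S := (_ == n); case: S; rewrite ?andbT ?andbF //.
apply/idP/idP.
- move=> /andP[/eqP m0 /and3P[/eqP ms /forallP F1 /forallP F2]].
  apply/forallP => i; rewrite /Aset.
  case: (ltngtP i s) => h.
  + case: (posnP i) => i0.
      by rewrite (_ : i = ord0) ?m0 //; apply: val_inj.
    by have := F1 i; rewrite i0 h.
  + by have := F2 i; rewrite h.
  + by rewrite (_ : i = s) ?ms ?eqxx //; apply: val_inj.
- move=> /forallP A; apply/andP; split.
    by have := A ord0; rewrite /Aset /= s0.
  apply/and3P; split.
  + by have := A s; rewrite /Aset ltnn eqxx.
  + apply/forallP => i; apply/implyP => /andP[_ h]; by have := A i; rewrite /Aset h.
  + apply/forallP => i; apply/implyP => h; have := A i; rewrite /Aset.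
    by rewrite ltnNge (ltnW h) /= (gtn_eqF h).
Qed.

Lemma sptk_coef k n : (0 < k)%N ->
  ((sptk_do k n)%:R : int) = (\sum_(1 <= s < n.+1) \prod_(0 <= i < n.+1) fac n k s i)`_n.
Proof.
move=> hk.
pose G s := \prod_(0 <= i < n.+1) fac n k s i.
have -> : \sum_(1 <= s < n.+1) G s = \sum_(s < n.+1) (if (0 < s)%N then G s else 0).
  rewrite -(big_mkord xpredT (fun s => if (0 < s)%N then G s else 0)).
  rewrite big_ltn //= add0r; apply: eq_big_nat => s /andP[h _]; by rewrite h.
rewrite sptk_sum // natr_sum coef_sum; apply: eq_bigr => s _.
case: (posnP s) => s0.
  rewrite coef0; apply/eqP; rewrite pnatr_eq0; apply/eqP; apply: eq_card0 => m.
  by rewrite inE /Qb s0 /= andbF.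
rewrite (eq_card (B := [pred m : {ffun 'I_n.+1 -> 'I_n.+1} | [forall i : 'I_n.+1, Aset k s i (m i)] &&
        ((\sum_(i < n.+1) (i * m i)%N)%N == n)])); last first.
  by move=> m; rewrite !inE part_equiv.
rewrite card_family /G /fac big_mkord.
have -> : (\prod_(i < n.+1) \sum_(0 <= c < n.+1 | Aset k s i c) 'X^(i * c)) = \prod_(i < n.+1) \sum_(c < n.+1 | Aset k s i c) 'X^(i * c) :> {poly int} by apply: eq_bigr => i _; rewrite big_mkord.
by [].
Qed.

Lemma cmod_sum M m1 m2 (F G : nat -> {poly int}) :
  (forall i, (m1 <= i < m2)%N -> cmod M (F i) (G i)) ->
  cmod M (\sum_(m1 <= i < m2) F i) (\sum_(m1 <= i < m2) G i).
Proof.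
move=> H; rewrite big_nat_cond [X in cmod _ _ X]big_nat_cond.
apply: (big_ind2 (cmod M)); first exact: cmod_refl.
  by move=> *; apply: cmodD.
by move=> i /andP[h _]; apply: H.
Qed.

Lemma PP_trunc M L s : (M <= L)%N -> cmod M (PP L s) (PP M s).
Proof.
move=> le; rewrite /PP (@big_cat_nat _ _ _ M 0 L) //=.
rewrite -[X in cmod _ _ X]mulr1; apply: cmodMl.
rewrite big_nat_cond; apply: (big_ind (fun x => cmod M x 1)); first exact: cmod_refl.
  by move=> x y hx hy; rewrite -(mulr1 1); apply: cmodM.
move=> i /andP[/andP[hi _] _]; case: ifP => _; last exact: cmod_refl.
by rewrite -[X in 1 + X]mulr1; apply: cmodX.
Qed.

Lemma cmod_GG k n N : (0 < k)%N -> (n < N)%N ->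
  cmod n.+1 (\sum_(1 <= s < n.+1) 'X^(k * s) * PP n.+1 s) (GG N.*2.+1 k).
Proof.
move=> hk hn; rewrite /GG (@big_cat_nat _ _ _ n.+1 1 N.*2.+1) //=; last lia.
apply: cmod_sym; rewrite -[X in cmod _ _ X]addr0; apply: cmodD.
  apply: cmod_sum => s _; apply: cmodMl; apply: PP_trunc; lia.
rewrite big_nat_cond; apply: (big_ind (fun x => cmod n.+1 x 0)); first exact: cmod_refl.
  by move=> x y hx hy; rewrite -(addr0 0); apply: cmodD.
move=> s /andP[/andP[hs _] _]; apply: cmodX0; nia.
Qed.

Theorem theorem3 (k : nat) (hk : (0 < k)%N) (n N : nat) (hnN : (n < N)%N) :
  ((sptk_do k n)%:Z : int) = (rhs_trunc k N)`_n.
Proof.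
rewrite -natz sptk_coef //; apply: (@cmod_coef n.+1); last by [].
apply: cmod_trans.
  apply: cmod_sum => s /andP[s0 sn]; apply: prod_fac => //.
apply: cmod_trans; first exact: (@cmod_GG k n N hk hnN).
rewrite rhs_eq; apply: (@cmodW N.*2.+1); first lia.
apply: GG_cong => //; lia.
Qed.
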